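(* Let $H$ be the graph on vertex set $\{0,1,\dots,42\}$ in which $i,j$ are adjacent iff $1\le|i-j|\le3$. Suppose the edges of $H$ are colored red/blue with no red cycle of length at most $8$, and suppose $\mathrm{up}(0)\notin\{RRR,RRB\}$. Then there exist $k\in\{1,\dots,39\}$ and a blue path $P_B$ in $H[\{0,\dots,k\}]$ with endpoints $0$ and $k$ such that $\mathrm{up}(k)\notin\{RRR,RRB\}$ and \[\frac{|V(P_B)\cap\{1,\dots,k\}|}{k}\ge\frac{19}{25}.\]
   Context: For a vertex $v$ with $v+3$ in the vertex set, $\mathrm{up}(v)=c_1c_2c_3\in\{R,B\}^3$ means that the edges $\{v,v+1\},\{v,v+2\},\{v,v+3\}$ have colors $c_1,c_2,c_3$ respectively ($R$ = red, $B$ = blue). *)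

(* Defs.v *)
From mathcomp Require Import all_boot.
Set Implicit Arguments. Unset Strict Implicit. Unset Printing Implicit Defensive.

Inductive color := R | B.

Definition is_red (c : color) : bool := if c is R then true else false.
Definition is_blue (c : color) : bool := if c is B then true else false.

Definition nV : nat := 43.
Definition adjH (x y : nat) : bool :=
  [&& x < nV, y < nV, x != y, x <= y + 3 & y <= x + 3].

(* An edge colouring: col x y is the colour of the edge {x,y};
   it is required to be symmetric (only its values on edges matter). *)
Definition symmetric_coloring (col : nat -> nat -> color) : Prop :=
  forall x y, col x y = col y x.

Definition red_edge (col : nat -> nat -> color) (x y : nat) : bool :=
  adjH x y && is_red (col x y).
Definition blue_edge (col : nat -> nat -> color) (x y : nat) : bool :=
  adjH x y && is_blue (col x y).

Definition red_cycle (col : nat -> nat -> color) (s : seq nat) : Prop :=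
  [/\ 3 <= size s, uniq s & cycle (red_edge col) s].

Definition no_short_red_cycle (col : nat -> nat -> color) : Prop :=
  forall s, red_cycle col s -> ~ (size s <= 8).

Definition up (col : nat -> nat -> color) (v : nat) : color * color * color :=
  (col v v.+1, col v v.+2, col v v.+3).

Definition blue_path_0k (col : nat -> nat -> color) (k : nat) (p : seq nat) : Prop :=
  [/\ uniq (0 :: p), all (fun v => v <= k) (0 :: p),
      path (blue_edge col) 0 p & last 0 p = k].

Definition cnt_1k (k : nat) (p : seq nat) : nat :=
  count (fun v => (1 <= v) && (v <= k)) (0 :: p).

(* Main.v *)
From Stdlib Require Import ZArith.
Require Import Defs.
From mathcomp Require Import all_boot zify.
Set Implicit Arguments. Unset Strict Implicit. Unset Printing Implicit Defensive.

Definition tri := (color * color * color)%type.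
Fixpoint nthu (us : seq tri) (x : nat) : option tri :=
  match us, x with
  | [::], _ => None
  | u :: _, 0 => Some u
  | _ :: us', x'.+1 => nthu us' x'
  end.
Definition sel3 (d : nat) (o : option tri) : option color :=
  match o with
  | Some t => match d with 1 => Some t.1.1 | 2 => Some t.1.2 | 3 => Some t.2 | _ => None end
  | None => None end.
Definition edgec (us : seq tri) (x y : nat) : option color :=
  if x < y then sel3 (y - x) (nthu us x) else sel3 (x - y) (nthu us y).
Definition isR (o : option color) : bool := if o is Some R then true else false.
Definition isB (o : option color) : bool := if o is Some B then true else false.
Definition redu (us : seq tri) (x y : nat) : bool := isR (edgec us x y).
Definition blueu (us : seq tri) (x y : nat) : bool := isB (edgec us x y).

Definition wedge (W : seq tri) (off c1 c2 : nat) : option color :=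
  if c2 < c1 then (if off <= c1 then sel3 (c1 - c2) (nthu W (c1 - off)) else None)
  else if c1 < c2 then (if off <= c2 then sel3 (c2 - c1) (nthu W (c2 - off)) else None)
  else None.

Definition segpats : seq (nat * seq nat) :=
  [:: (1, [:: 0]);
     (2, [:: 0]);
     (3, [:: 1; 2; 0]);
     (3, [:: 0]);
     (4, [:: 2; 3; 0]);
     (4, [:: 2; 1; 3; 0]);
     (4, [:: 1; 3; 2; 0]);
     (4, [:: 1; 3; 0]);
     (4, [:: 1; 2; 3; 0]);
     (4, [:: 1; 2; 0]);
     (5, [:: 3; 4; 1; 2; 0]);
     (5, [:: 3; 1; 4; 2; 0]);
     (5, [:: 2; 4; 3; 0]);
     (5, [:: 2; 4; 1; 3; 0]);
     (5, [:: 2; 3; 0]);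
     (5, [:: 2; 1; 4; 3; 0]);
     (5, [:: 2; 1; 3; 0]);
     (6, [:: 4; 5; 2; 3; 0]);
     (6, [:: 4; 5; 2; 1; 3; 0]);
     (6, [:: 4; 2; 5; 3; 0]);
     (6, [:: 4; 1; 3; 5; 2; 0]);
     (6, [:: 4; 1; 2; 5; 3; 0]);
     (6, [:: 3; 5; 4; 1; 2; 0]);
     (6, [:: 3; 4; 1; 2; 0]);
     (6, [:: 3; 1; 4; 5; 2; 0]);
     (6, [:: 3; 1; 4; 2; 0]);
     (7, [:: 5; 6; 3; 4; 1; 2; 0]);
     (7, [:: 5; 3; 6; 4; 1; 2; 0]);
     (7, [:: 5; 2; 4; 6; 3; 0]);
     (7, [:: 5; 2; 1; 4; 6; 3; 0]);
     (7, [:: 4; 6; 5; 2; 1; 3; 0]);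
     (7, [:: 4; 2; 5; 6; 3; 0]);
     (7, [:: 4; 2; 5; 3; 0]);
     (7, [:: 4; 1; 3; 6; 5; 2; 0]);
     (7, [:: 4; 1; 2; 5; 6; 3; 0]);
     (7, [:: 4; 1; 2; 5; 3; 0]);
     (8, [:: 6; 7; 4; 1; 3; 5; 2; 0]);
     (8, [:: 6; 3; 5; 7; 4; 1; 2; 0]);
     (8, [:: 6; 3; 1; 4; 7; 5; 2; 0]);
     (8, [:: 5; 3; 6; 7; 4; 1; 2; 0]);
     (8, [:: 5; 3; 6; 4; 1; 2; 0]);
     (8, [:: 5; 2; 4; 7; 6; 3; 0]);
     (8, [:: 5; 2; 1; 4; 7; 6; 3; 0]);
     (8, [:: 5; 2; 1; 4; 6; 3; 0])].


Inductive ctrie := CNode : nat -> bool -> cforest -> ctrie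
with cforest := CNil | CCons : ctrie -> cforest -> cforest.

Fixpoint tsearch (W : seq tri) (prev : nat) (t : ctrie) : option (seq nat) :=
  match t with
  | CNode c fl ch =>
    if isR (wedge W 3 prev c) then
      if fl && isR (wedge W 3 c 3) then Some [:: c] else
      match fsearch W c ch with Some p => Some (c :: p) | None => None end
    else None
  end
with fsearch (W : seq tri) (prev : nat) (f : cforest) : option (seq nat) :=
  match f with
  | CNil => None
  | CCons t f' => match tsearch W prev t with Some p => Some p | None => fsearch W prev f' end
  end.

Definition cyctrie : cforest :=
  (CCons (CNode 1 false (CCons (CNode 4 true (CCons (CNode 2 false (CCons (CNode 5 true (CCons (CNode 6 true CNil) (CCons (CNode 7 false (CCons (CNode 6 true CNil) (CCons (CNode 9 false (CCons (CNode 6 true CNil) CNil)) CNil))) (CCons (CNode 8 false (CCons (CNode 6 true CNil) (CCons (CNode 9 false (CCons (CNode 6 true CNil) CNil)) CNil))) CNil)))) CNil)) (CCons (CNode 5 true (CCons (CNode 6 true CNil) (CCons (CNode 7 false (CCons (CNode 6 true CNil) (CCons (CNode 8 false (CCons (CNode 6 true CNil) CNil)) (CCons (CNode 9 false (CCons (CNode 6 true CNil) CNil)) CNil)))) (CCons (CNode 8 false (CCons (CNode 6 true CNil) (CCons (CNode 9 false (CCons (CNode 6 true CNil) CNil)) CNil))) CNil)))) (CCons (CNode 6 true (CCons (CNode 5 true CNil) (CCons (CNode 7 false (CCons (CNode 5 true CNil) CNil)) (CCons (CNode 8 false (CCons (CNode 5 true CNil) CNil)) (CCons (CNode 9 false (CCons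 (CNode 7 false (CCons (CNode 5 true CNil) CNil)) (CCons (CNode 8 false (CCons (CNode 5 true CNil) CNil)) CNil))) CNil))))) (CCons (CNode 7 false (CCons (CNode 5 true (CCons (CNode 6 true CNil) CNil)) (CCons (CNode 6 true (CCons (CNode 5 true CNil) CNil)) (CCons (CNode 8 false (CCons (CNode 5 true CNil) (CCons (CNode 6 true CNil) (CCons (CNode 9 false (CCons (CNode 6 true CNil) CNil)) CNil)))) (CCons (CNode 9 false (CCons (CNode 6 true (CCons (CNode 5 true CNil) CNil)) (CCons (CNode 8 false (CCons (CNode 5 true CNil) (CCons (CNode 6 true CNil) CNil))) CNil))) CNil))))) CNil))))) CNil)) (CCons (CNode 2 false (CCons (CNode 4 true (CCons (CNode 1 true CNil) (CCons (CNode 5 true (CCons (CNode 6 true CNil) (CCons (CNode 7 false (CCons (CNode 6 true CNil) (CCons (CNode 8 false (CCons (CNode 6 true CNil) CNil)) (CCons (CNode 9 false (CCons (CNode 6 true CNil) CNil)) CNil)))) (CCons (CNode 8 false (CCons (CNode 6 true CNil) (CCons (CNode 9 false (CCons (CNode 6 true CNil) CNil)) CNil))) CNil)))) (CCons (CNode 6 true (CCons (CNode 5 true CNil) (CCons (CNode 7 false (CCons (CNode 5 true CNil) CNil)) (CCons (CNode 8 false (CCons (CNode 5 true CNil) CNil)) (CCons (CNode 9 false (CCons (CNode 7 false (CCons (CNode 5 true CNil) CNil)) (CCons (CNode 8 false (CCons (CNode 5 true CNil) CNil)) CNil))) CNil))))) (CCons (CNode 7 false (CCons (CNode 5 true (CCons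 (CNode 6 true CNil) CNil)) (CCons (CNode 6 true (CCons (CNode 5 true CNil) CNil)) (CCons (CNode 8 false (CCons (CNode 5 true CNil) (CCons (CNode 6 true CNil) (CCons (CNode 9 false (CCons (CNode 6 true CNil) CNil)) CNil)))) (CCons (CNode 9 false (CCons (CNode 6 true (CCons (CNode 5 true CNil) CNil)) (CCons (CNode 8 false (CCons (CNode 5 true CNil) (CCons (CNode 6 true CNil) CNil))) CNil))) CNil))))) CNil))))) (CCons (CNode 5 true (CCons (CNode 4 true (CCons (CNode 1 true CNil) (CCons (CNode 6 true CNil) (CCons (CNode 7 false (CCons (CNode 6 true CNil) (CCons (CNode 9 false (CCons (CNode 6 true CNil) CNil)) CNil))) CNil)))) (CCons (CNode 6 true (CCons (CNode 4 true (CCons (CNode 1 true CNil) CNil)) (CCons (CNode 7 false (CCons (CNode 4 true (CCons (CNode 1 true CNil) CNil)) CNil)) (CCons (CNode 9 false (CCons (CNode 7 false (CCons (CNode 4 true (CCons (CNode 1 true CNil) CNil)) CNil)) CNil)) CNil)))) (CCons (CNode 7 false (CCons (CNode 4 true (CCons (CNode 1 true CNil) (CCons (CNode 6 true CNil) CNil))) (CCons (CNode 6 true (CCons (CNode 4 true (CCons (CNode 1 true CNil) CNil)) CNil)) (CCons (CNode 8 false (CCons (CNode 6 true CNil) CNil)) (CCons (CNode 9 false (CCons (CNode 6 true (CCons (CNode 4 true (CCons (CNode 1 true CNil) CNil)) CNil)) CNil)) CNil))))) (CCons (CNode 8 false (CCons (CNode 6 true (CCons (CNode 4 true (CCons (CNode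 1 true CNil) CNil)) CNil)) (CCons (CNode 7 false (CCons (CNode 4 true (CCons (CNode 1 true CNil) CNil)) (CCons (CNode 6 true CNil) CNil))) (CCons (CNode 9 false (CCons (CNode 6 true (CCons (CNode 4 true (CCons (CNode 1 true CNil) CNil)) CNil)) (CCons (CNode 7 false (CCons (CNode 4 true (CCons (CNode 1 true CNil) CNil)) CNil)) CNil))) CNil)))) CNil))))) CNil))) CNil)).

Definition redW (W : seq tri) (a b : nat) : bool := isR (wedge W 3 a b).
Definition blueW (W : seq tri) (a b : nat) : bool := isB (wedge W 1 a b).

Definition rc_okW (W : seq tri) (s : seq nat) : bool :=
  [&& 3 <= size s, size s <= 8, uniq s & cycle (redW W) s].

Definition red_found (W : seq tri) : bool :=
  match fsearch W 3 cyctrie with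
  | Some p => rc_okW W (3 :: p)
  | None => false
  end.

Definition sc (sa : Z) (n L : nat) : Z := (sa + 25 * Z.of_nat n - 19 * Z.of_nat L)%Z.
Arguments sc : simpl never.

Fixpoint chainB (W : seq tri) (c : nat) (p : seq nat) : bool :=
  match p with
  | [::] => true
  | c' :: p' => if blueW W c c' then chainB W c' p' else false
  end.

Definition cand (W : seq tri) (bestsR : seq (option (Z * seq nat))) (v : nat) :
  option (Z * nat * seq nat) :=
  foldr (fun lp acc =>
    let: (L, qs) := lp in
    if L <= v then
      match nth None bestsR L.-1 with
      | Some (s, _) =>
        if chainB W L qs then
          let s' := sc s (size qs) L in
          match acc with
          | Some (t, _, _) => if Z.ltb t s' then Some (s', L, qs) else acc
          | None => Some (s', L, qs) end
        else acc
      | None => acc end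
    else acc) None segpats.

Definition seg_okW (W : seq tri) (L : nat) (qs : seq nat) : bool :=
  [&& uniq qs, all (fun q => q < L) qs, path (blueW W) L qs & last L qs == 0].

Definition bestv (W : seq tri) (bestsR : seq (option (Z * seq nat))) (v : nat) :
  option (Z * seq nat) :=
  match cand W bestsR v with
  | Some (_, L, qs) =>
    match nth None bestsR L.-1 with
    | Some (sa, pa) =>
      if (0 < L) && (L <= v) && seg_okW W L qs then
        Some (sc sa (size qs) L,
              pa ++ map (fun q => v - q) qs)
      else None
    | None => None end
  | None => None end.

Arguments cand : simpl never.
Arguments bestv : simpl never.
Arguments red_found : simpl never.

Definition bad (u : tri) : bool := is_red u.1.1 && is_red u.1.2.

Definition choices : seq tri :=
  [:: (R,R,R); (R,R,B); (R,B,R); (R,B,B); (B,R,R); (B,R,B); (B,B,R); (B,B,B)].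

Fixpoint check (f v : nat) (W : seq tri) (bestsR : seq (option (Z * seq nat))) : bool :=
  match f with 0 => false | f'.+1 =>
  let bv := if v == 0 then Some (0%Z, [::]) else bestv W bestsR v in
  let succ := (v != 0) && (if bv is Some (s, _) then Z.leb 0 s else false) in
  all (fun u =>
     let W' := take 13 (u :: W) in
     if (v == 0) && bad u then true
     else if red_found W' then true
     else if succ && ~~ bad u then true
     else if v < 39 then check f' v.+1 W' (bv :: bestsR) else false) choices
  end.

Definition goal (col : nat -> nat -> color) : Prop :=
  exists k : nat, exists p : seq nat,
    [/\ 1 <= k <= 39,
        blue_path_0k col k p,
        up col k <> (R, R, R) /\ up col k <> (R, R, B)
      & 19 * k <= 25 * cnt_1k k p].

Definition win col n : seq tri := take 13 (rev (mkseq (up col) n)).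

Lemma nthu_nth s x : nthu s x = if x < size s then Some (nth (B,B,B) s x) else None.
Proof. by elim: s x => [|u s IH] [|x] //=. Qed.

Lemma nthu_win col n i :
  nthu (win col n) i = if (i < 13) && (i < n) then Some (up col (n - i.+1)) else None.
Proof.
rewrite nthu_nth /win size_take size_rev size_mkseq.
case: (boolP ((i < 13) && (i < n))) => H.
  have H1 : i < (if 13 < n then 13 else n) by case: ifP; lia.
  rewrite H1 nth_take; last by lia.
  rewrite nth_rev ?size_mkseq; last by lia.
  by rewrite nth_mkseq //; lia.
have H1 : (i < (if 13 < n then 13 else n)) = false by case: ifP; lia.
by rewrite H1.
Qed.

Lemma wedge_col col n off c1 c2 k : symmetric_coloring col -> n + off <= 43 ->
  wedge (win col n) off c1 c2 = Some k ->
  [/\ c1 <= n + off - 1, c2 <= n + off - 1,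
      adjH (n + off - 1 - c1) (n + off - 1 - c2) &
      col (n + off - 1 - c1) (n + off - 1 - c2) = k].
Proof.
move=> Hs Hn; rewrite /wedge.
case: ifP => H21.
  case: ifP => // Ho; rewrite nthu_win; case: ifP => // /andP[Hi13 Hin].
  have Ex : n - (c1 - off).+1 = n + off - 1 - c1 by lia.
  rewrite Ex /sel3 /up.
  case E: (c1 - c2) => [|[|[|[|d]]]] //= [<-];
  (split; [lia|lia|rewrite /adjH /nV; apply/and5P; split; [lia|lia|apply/eqP; lia|lia|lia]|]).
  - by have -> : n + off - 1 - c2 = (n + off - 1 - c1).+1 by lia.
  - by have -> : n + off - 1 - c2 = (n + off - 1 - c1).+2 by lia.
  - by have -> : n + off - 1 - c2 = (n + off - 1 - c1).+3 by lia.
case: ifP => // H12.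
case: ifP => // Ho; rewrite nthu_win; case: ifP => // /andP[Hi13 Hin].
have Ex : n - (c2 - off).+1 = n + off - 1 - c2 by lia.
rewrite Ex /sel3 /up Hs.
case E: (c2 - c1) => [|[|[|[|d]]]] //= [<-];
(split; [lia|lia|rewrite /adjH /nV; apply/and5P; split; [lia|lia|apply/eqP; lia|lia|lia]|]).
- by have -> : n + off - 1 - c1 = (n + off - 1 - c2).+1 by lia.
- by have -> : n + off - 1 - c1 = (n + off - 1 - c2).+2 by lia.
- by have -> : n + off - 1 - c1 = (n + off - 1 - c2).+3 by lia.
Qed.

Lemma redW_col col n a b : symmetric_coloring col -> n + 3 <= 43 ->
  redW (win col n) a b ->
  [/\ a <= n + 2, b <= n + 2 & red_edge col (n + 2 - a) (n + 2 - b)].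
Proof.
move=> Hs Hn; rewrite /redW.
case E: wedge => [[]|] //= _.
case: (wedge_col Hs Hn E) => H1 H2 H3 H4.
have -> : n + 2 = n + 3 - 1 by lia.
by split => //; rewrite /red_edge H3 H4.
Qed.

Lemma blueW_col col n a b : symmetric_coloring col -> n + 1 <= 43 ->
  blueW (win col n) a b ->
  [/\ a <= n, b <= n & blue_edge col (n - a) (n - b)].
Proof.
move=> Hs Hn; rewrite /blueW.
case E: wedge => [[]|] //= _.
case: (wedge_col Hs Hn E) => H1 H2 H3 H4.
have Hn1 : n + 1 - 1 = n by lia.
rewrite Hn1 in H1 H2 H3 H4.
by split => //; rewrite /blue_edge H3 H4.
Qed.

Lemma red_found_sound col n : symmetric_coloring col -> no_short_red_cycle col ->
  n + 3 <= 43 -> red_found (win col n) -> False.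
Proof.
move=> Hs Hno Hn; rewrite /red_found.
case: fsearch => [p|] //; rewrite /rc_okW => /and4P[H3 H8 Hu Hc].
set s := 3 :: p in H3 H8 Hu Hc.
have Hb : forall x, x \in s -> x <= n + 2.
  move=> x Hx; have := next_cycle Hc Hx.
  by case/(redW_col Hs Hn).
apply: (Hno (map (fun c => n + 2 - c) s)); last by rewrite size_map.
split; first by rewrite size_map.
  rewrite map_inj_in_uniq // => x y Hx Hy /= E.
  have := Hb x Hx; have := Hb y Hy; lia.
rewrite cycle_map.
apply: sub_cycle Hc => x y /= /(redW_col Hs Hn) [].
by [].
Qed.


Definition Inv col v (bestsR : seq (option (Z * seq nat))) : Prop :=
  forall i s p, nth None bestsR i = Some (s, p) ->
    [/\ i < v, blue_path_0k col (v - i.+1) p &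
        (s <= 25 * Z.of_nat (cnt_1k (v - i.+1) p) - 19 * Z.of_nat (v - i.+1))%Z].

Lemma cnt_cat a v pa sg : a <= v -> all (fun x => x <= a) (0 :: pa) ->
  all (fun x => (a < x) && (x <= v)) sg ->
  cnt_1k v (pa ++ sg) = cnt_1k a pa + size sg.
Proof.
move=> Hav Hpa Hsg; rewrite /cnt_1k -cat_cons count_cat.
congr (_ + _).
  apply: eq_in_count => x /(allP Hpa) /= Hx; lia.
rewrite -[RHS]count_predT; apply: eq_in_count => x /(allP Hsg) /= Hx; lia.
Qed.

Lemma bestv_sound col v W bestsR s p : symmetric_coloring col ->
  0 < v <= 39 -> W = win col v -> Inv col v bestsR ->
  bestv W bestsR v = Some (s, p) ->
  blue_path_0k col v p /\
  (s <= 25 * Z.of_nat (cnt_1k v p) - 19 * Z.of_nat v)%Z.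
Proof.
move=> Hs Hv -> HI; rewrite /bestv.
case: cand => [[[_ L] qs]|] //.
case E: nth => [[sa pa]|] //.
case: ifP => // /andP[/andP[L0 Lv] Hseg] [Es <-].
have [HL [Hu Ha Hp Hl] Hsa] := HI _ _ _ E.
have Ea : v - L.-1.+1 = v - L by lia.
rewrite Ea in Hu Ha Hp Hl Hsa.
move: Hseg; rewrite /seg_okW => /and4P[Uq Aq Pq /eqP Lq].
set sg := map (fun q => v - q) qs.
have Asg : all (fun x => (v - L < x) && (x <= v)) sg.
  apply/allP => x /mapP[q /(allP Aq) /= Hq ->]; lia.
have Hpath : path (blue_edge col) (v - L) sg.
  rewrite path_map; apply: sub_path Pq => x y /=.
  have Hv1 : v + 1 <= 43 by lia.
  by case/(blueW_col Hs Hv1).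
have Hlast : last (v - L) sg = v by rewrite last_map Lq subn0.
have Usg : uniq sg.
  rewrite map_inj_in_uniq // => x y /(allP Aq) /= Hx /(allP Aq) /= Hy; lia.
have Hcnt := cnt_cat (leq_subr L v) Ha Asg.
split.
  split.
  - rewrite -cat_cons cat_uniq Hu Usg andbT /=.
    apply/hasPn => x /(allP Asg) /= /andP[H1 H2].
    apply/negP => /(allP Ha) /=; lia.
  - rewrite -cat_cons all_cat; apply/andP; split.
      apply/allP => x /(allP Ha) /=; lia.
    by apply/allP => x /(allP Asg) /= /andP[].
  - by rewrite cat_path Hp Hl.
  - by rewrite last_cat Hl.
rewrite Hcnt size_map -Es /sc; lia.
Qed.

Lemma Inv_step col v W bestsR : symmetric_coloring col -> v <= 39 ->
  W = win col v -> Inv col v bestsR ->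
  Inv col v.+1 ((if v == 0 then Some (0%Z, [::]) else bestv W bestsR v) :: bestsR).
Proof.
move=> Hs Hv HW HI [|i] s p /=.
  rewrite subSS subn0.
  case: eqP => [-> [<- <-]|v0 /= E].
    by split => //; rewrite /blue_path_0k.
  have Hv' : 0 < v <= 39 by clear -Hv v0; lia.
  have [Hb Hz] := bestv_sound Hs Hv' HW HI E.
  by split.
move=> /HI [Hi Hb Hz]; rewrite subSS; split => //.
Qed.

Lemma all_choices (P : pred tri) : all P choices -> forall u, P u.
Proof.
move=> /= /andP[h1 /andP[h2 /andP[h3 /andP[h4 /andP[h5 /andP[h6 /andP[h7 /andP[h8 _]]]]]]]].
by case=> [[[] []] []].
Qed.

Lemma win_step col v : take 13 (up col v :: win col v) = win col v.+1.
Proof.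
by rewrite /win mkseqS rev_rcons /= take_takel.
Qed.

Lemma check_sound col f : symmetric_coloring col -> no_short_red_cycle col ->
  ~~ bad (up col 0) ->
  forall v W bestsR, v <= 39 -> W = win col v -> Inv col v bestsR ->
  check f v W bestsR -> goal col.
Proof.
move=> Hs Hno H0; elim: f => [//|f IH] v W bestsR Hv HW HI.
move/all_choices/(_ (up col v)) => H; cbv beta zeta in H; move: H.
rewrite HW win_step.
case: ifP => [/andP[/eqP v0 Hb]|_]; first by subst v; rewrite Hb in H0.
case: ifP => [Hr|_].
  have Hn : v.+1 + 3 <= 43 by lia.
  by case: (red_found_sound Hs Hno Hn Hr).
case: ifP => [/andP[Hsucc Hg]|_].
  move: Hsucc; case: eqP => //= v0.
  case E: bestv => [[s p]|] //= Hs0.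
  have Hv' : 0 < v <= 39 by clear -Hv v0; lia.
  have [Hbp Hz] := bestv_sound Hs Hv' erefl HI E.
  exists v, p; split => //.
    move: Hg; rewrite /bad /up.
    by case: (col v v.+1); case: (col v v.+2).
  move/Z.leb_le: Hs0 => Hs0; lia.
case: ifP => // Hv39 H.
apply: (IH v.+1 _ _ Hv39 erefl _ H).
exact: (Inv_step Hs Hv erefl HI).
Qed.

Lemma check_ok : check 41 0 [::] [::].
Proof. by vm_compute. Qed.

Theorem lemma4p1 (col : nat -> nat -> color) :
  symmetric_coloring col ->
  no_short_red_cycle col ->
  up col 0 <> (R, R, R) -> up col 0 <> (R, R, B) ->
  exists k : nat, exists p : seq nat,
    [/\ 1 <= k <= 39,
        blue_path_0k col k p,
        up col k <> (R, R, R) /\ up col k <> (R, R, B)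
      & 19 * k <= 25 * cnt_1k k p].
Proof.
move=> Hs Hno H1 H2.
have H0 : ~~ bad (up col 0).
  move: H1 H2; rewrite /bad /up.
  by case: (col 0 1); case: (col 0 2); case: (col 0 3).
have HI : Inv col 0 [::] by move=> [|i] s p.
exact: (@check_sound col 41 Hs Hno H0 0 [::] [::] isT erefl HI check_ok).
Qed.
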